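(* Let $L$ be a Lie algebra over a field $K$ of characteristic different from $2$ and $3$. Define $u:Z^2_{comm}(L)\to ADer(L,L^* )$ by $(u(\varphi)(x))(y)=\varphi(x,y)$, and $v:ADer(L,L^* )\to C(L)$ by $v(d)(x,y)=d(x)(y)-d(y)(x)$, for $x,y\in L$. Then $u$ and $v$ are well-defined linear maps (i.e. $u(\varphi)$ is an antiderivation and $v(d)$ is a cyclic skew-symmetric form), and the sequence $$0\to Z^2_{comm}(L)\xrightarrow{u}ADer(L,L^* )\xrightarrow{v}C(L)$$ is exact, i.e. $u$ is injective and $\operatorname{Im}u=\operatorname{Ker}v$.
   Context: $Z^2_{comm}(L)$ is the space of commutative $2$-cocycles: symmetric bilinear forms $\varphi:L\times L\to K$ with $\varphi([x,y],z)+\varphi([z,x],y)+\varphi([y,z],x)=0$ for all $x,y,z\in L$. $L^*$ is the coadjoint module, with action $(x\bullet f)(y)=-f([x,y])$. For an $L$-module $M$, an antiderivation $d:L\to M$ is a linear map with $d([x,y])=y\bullet d(x)-x\bullet d(y)$ for all $x,y\in L$; $ADer(L,M)$ is the space of these. For $M=L^*$ this condition reads $d([x,y])(z)=d(x)([y,z])-d(y)([x,z])$ for all $x,y,z\in L$. A bilinear form $\psi$ on $L$ is cyclic if $\psi([x,y],z)=\psi([z,x],y)$ for all $x,y,z\in L$; $C(L)$ is the space of cyclic skew-symmetric bilinear forms on $L$. *)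

(* Defs.v *)
From HB Require Import structures.
From mathcomp Require Import all_boot all_order all_algebra.
Set Implicit Arguments. Unset Strict Implicit. Unset Printing Implicit Defensive.
Import GRing.Theory.
Local Open Scope ring_scope.

Section LieDefs.
Variables (K : fieldType) (L : lmodType K).

Definition is_lie_bracket (br : L -> L -> L) : Prop :=
  [/\ (forall a x y z, br (a *: x + y) z = a *: br x z + br y z),
      (forall a x y z, br x (a *: y + z) = a *: br x y + br x z),
      (forall x, br x x = 0) &
      (forall x y z, br x (br y z) + br y (br z x) + br z (br x y) = 0)].

Definition is_lin_functional (f : L -> K) : Prop :=
  forall a x y, f (a *: x + y) = a * f x + f y.

Definition is_bilinear_form (phi : L -> L -> K) : Prop :=
  (forall a x y z, phi (a *: x + y) z = a * phi x z + phi y z) /\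
  (forall a x y z, phi x (a *: y + z) = a * phi x y + phi x z).

Definition Z2comm (br : L -> L -> L) (phi : L -> L -> K) : Prop :=
  [/\ is_bilinear_form phi,
      (forall x y, phi x y = phi y x) &
      (forall x y z, phi (br x y) z + phi (br z x) y + phi (br y z) x = 0)].

Definition coad (br : L -> L -> L) (x : L) (f : L -> K) : L -> K :=
  fun y => - f (br x y).

Definition ADer (br : L -> L -> L) (d : L -> L -> K) : Prop :=
  [/\ (forall x, is_lin_functional (d x)),
      (forall a x y z, d (a *: x + y) z = a * d x z + d y z) &
      (forall x y z, d (br x y) z = coad br y (d x) z - coad br x (d y) z)].

Definition Ccyc (br : L -> L -> L) (psi : L -> L -> K) : Prop :=
  [/\ is_bilinear_form psi,
      (forall x y, psi x y = - psi y x) &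
      (forall x y z, psi (br x y) z = psi (br z x) y)].

Definition u_map (phi : L -> L -> K) : L -> L -> K := fun x y => phi x y.
Definition v_map (d : L -> L -> K) : L -> L -> K := fun x y => d x y - d y x.

End LieDefs.

(* Main.v *)
Require Import Defs.
From mathcomp Require Import all_boot all_order all_algebra.
From mathcomp Require Import ring.
Import GRing.Theory.
Local Open Scope ring_scope.

Set Implicit Arguments.
Section Helpers.
Variables (K : fieldType) (L : lmodType K).

Lemma lf_add {f : L -> K} : (forall a x y, f (a *: x + y) = a * f x + f y) ->
  forall x y, f (x + y) = f x + f y.
Proof. by move=> H x y; have := H 1 x y; rewrite scale1r mul1r. Qed.

Lemma lf_0 {f : L -> K} : (forall a x y, f (a *: x + y) = a * f x + f y) -> f 0 = 0.
Proof.
move=> H; have := lf_add H 0 0; rewrite addr0 => E.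
by have := congr1 (fun t => t - f 0) E; rewrite /= subrr addrK.
Qed.

Lemma lf_N {f : L -> K} : (forall a x y, f (a *: x + y) = a * f x + f y) ->
  forall x, f (- x) = - f x.
Proof.
move=> H x; have := H (-1) x 0; rewrite addr0 (lf_0 H) addr0 scaleN1r.
by rewrite mulN1r.
Qed.

Lemma br_N {br : L -> L -> L} : is_lie_bracket br -> forall x y, br x y = - br y x.
Proof.
case=> H1 H2 H3 _ x y.
have A1 : forall x y z, br (x + y) z = br x z + br y z.
  by move=> a b c; have := H1 1 a b c; rewrite !scale1r.
have A2 : forall x y z, br x (y + z) = br x y + br x z.
  by move=> a b c; have := H2 1 a b c; rewrite !scale1r.
have := H3 (x + y); rewrite A1 !A2 !H3 add0r addr0 => /eqP.
by rewrite addr_eq0 => /eqP.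
Qed.

End Helpers.
Arguments lf_N {K L f}.
Arguments lf_0 {K L f}.
Arguments lf_add {K L f}.
Arguments br_N {K L br}.

Theorem proposition1p3 (K : fieldType) (L : lmodType K) (br : L -> L -> L) :
  (2 \notin [pchar K])%N -> (3 \notin [pchar K])%N ->
  is_lie_bracket br ->
  (  (* u is well defined and linear *)
      (forall phi, Z2comm br phi -> ADer br (u_map phi)) /\
      (forall (a : K) (phi1 phi2 : L -> L -> K) (x y : L),
          u_map (fun s t => a * phi1 s t + phi2 s t) x y
          = a * u_map phi1 x y + u_map phi2 x y) /\
      (* v is well defined and linear *)
      (forall d, ADer br d -> Ccyc br (v_map d)) /\
      (forall (a : K) (d1 d2 : L -> L -> K) (x y : L),
          v_map (fun s t => a * d1 s t + d2 s t) x y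
          = a * v_map d1 x y + v_map d2 x y) /\
      (* u is injective *)
      (forall phi1 phi2, Z2comm br phi1 -> Z2comm br phi2 ->
          (forall x y, u_map phi1 x y = u_map phi2 x y) ->
          forall x y, phi1 x y = phi2 x y) /\
      (* Im u is contained in Ker v *)
      (forall phi, Z2comm br phi -> forall x y, v_map (u_map phi) x y = 0) /\
      (* Ker v is contained in Im u *)
      (forall d, ADer br d -> (forall x y, v_map d x y = 0) ->
          exists phi, Z2comm br phi /\ forall x y, u_map phi x y = d x y)).
Proof.
move=> _ _ Hbr; have bN := br_N Hbr.
split.
  move=> phi [[B1 B2] S C]; split; [by move=> x a y z; exact: B2 | exact: B1 |].
  move=> x y z; rewrite /u_map /coad.
  have E := C x y z; rewrite (S (br z x)) (S (br y z)) in E.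
  rewrite (bN x z) (lf_N (fun a => B2 a y)).
  apply/eqP; rewrite -subr_eq0 -E; apply/eqP; ring.
split; first by move=> *; rewrite /u_map.
split.
  move=> d [D1 D2 D3]; split.
  - split=> a x y z; rewrite /v_map D2 D1; ring.
  - by move=> x y; rewrite /v_map opprB.
  - move=> x y z; rewrite /v_map !D3 /coad [br z y]bN [br z x]bN.
    rewrite (lf_N (D1 x)) (lf_N (D1 y)); ring.
split; first by move=> *; rewrite /v_map; ring.
split; first by move=> phi1 phi2 _ _ H x y; exact: H.
split; first by move=> phi [_ S _] x y; rewrite /v_map /u_map S subrr.
move=> d [D1 D2 D3] V; exists d; split => //.
have S : forall x y, d x y = d y x by move=> x y; apply/eqP; rewrite -subr_eq0 -(V x y).
split.
- by split=> a x y z; rewrite ?D2 ?D1.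
- exact: S.
- move=> x y z.
  have E : d x (br y z) = d y (br x z) - d z (br x y).
    rewrite S D3 /coad [br z x]bN [br y x]bN !(lf_N (D1 _)); ring.
  rewrite !D3 /coad [br z y]bN [br z x]bN [br y x]bN !(lf_N (D1 _)) E; ring.
Qed.
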